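(* Let $\Lambda=\{ab^ic\mid i\geq 1\}$. The submonoid of $\Pi_2=\langle a,b,c\mid (ab^ic)^2=1\ (i\geq 1)\rangle$ generated by the elements represented by the words of $\Lambda$ is equal to the group of units $U(\Pi_2)$.
   Context: The group of units $U(M)$ of a monoid $M$ is the set of elements having both a left and a right inverse. *)

(* Defs.v *)
(* The monoid Pi_2 = < a, b, c | (a b^i c)^2 = 1 (i >= 1) > is
   represented as words over {a,b,c} modulo the congruence generated by the
   defining relations; elements of Pi_2 are congruence classes of words. *)
From Stdlib Require Import List Arith.
Import ListNotations.

Inductive letter : Type := la | lb | lc.

Definition word := list letter.

Definition lam (i : nat) : word := la :: repeat lb i ++ [lc].

Inductive pi2_eq : word -> word -> Prop :=
| pi2_rel : forall i, 1 <= i -> pi2_eq (lam i ++ lam i) []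
| pi2_refl : forall u, pi2_eq u u
| pi2_sym : forall u v, pi2_eq u v -> pi2_eq v u
| pi2_trans : forall u v w, pi2_eq u v -> pi2_eq v w -> pi2_eq u w
| pi2_ctx : forall x y u v, pi2_eq u v -> pi2_eq (x ++ u ++ y) (x ++ v ++ y).

Definition pi2_unit (w : word) : Prop :=
  (exists v, pi2_eq (w ++ v) []) /\ (exists v, pi2_eq (v ++ w) []).

Definition in_Lambda_submonoid (w : word) : Prop :=
  exists l : list nat, Forall (fun i => 1 <= i) l /\ pi2_eq w (concat (map lam l)).

(* Main.v *)
Require Import Defs.
From Stdlib Require Import List Arith Lia Bool.
Import ListNotations.

Fixpoint strip (r : word) : nat * word :=
  match r with
  | lb :: r' => let (n, q) := strip r' in (S n, q)
  | _ => (0, r)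
  end.

Definition nb (q : word) : Prop := match q with lb :: _ => False | _ => True end.

Definition step (r : word) (l : letter) : word :=
  match l with
  | lc =>
    let (i, q) := strip r in
    match q with
    | la :: lc :: q' =>
      let (j, q'') := strip q' in
      match q'' with
      | la :: r' => if (Nat.eqb i j) && (Nat.leb 1 i) then r' else lc :: r
      | _ => lc :: r
      end
    | _ => lc :: r
    end
  | _ => l :: r
  end.

Lemma letter_eq : forall l, l = lc \/ l <> lc.
Proof. intros []; auto; right; discriminate. Qed.

Definition F (t w : word) : word := fold_left step w t.

Lemma strip_spec : forall r n q, strip r = (n, q) -> r = repeat lb n ++ q /\ nb q.
Proof.
  induction r as [|x r IH]; intros n q H.
  - simpl in H. inversion H. simpl. auto.
  - destruct x; simpl in H.
    + inversion H; subst. simpl. auto.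
    + destruct (strip r) as [m q'] eqn:E. inversion H; subst.
      destruct (IH _ _ eq_refl) as [-> Hq]. simpl. auto.
    + inversion H; subst. simpl. auto.
Qed.

Lemma rep_eq : forall i j q1 q2, nb q1 -> nb q2 ->
  repeat lb i ++ q1 = repeat lb j ++ q2 -> i = j /\ q1 = q2.
Proof.
  induction i; destruct j; intros q1 q2 H1 H2 E; simpl in *.
  - auto.
  - subst q1. simpl in H1. contradiction.
  - subst q2. simpl in H2. contradiction.
  - injection E as E. destruct (IHi j q1 q2 H1 H2 E). auto.
Qed.

Definition pat (i : nat) (r' : word) : word :=
  repeat lb i ++ la :: lc :: repeat lb i ++ la :: r'.

Lemma step_c : forall r,
  (exists i r', 1 <= i /\ r = pat i r' /\ step r lc = r') \/
  (step r lc = lc :: r /\ forall i r', 1 <= i -> r <> pat i r').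
Proof.
  intro r. unfold step.
  destruct (strip r) as [i q] eqn:E. apply strip_spec in E as [Er Nq].
  assert (NP : (forall k r', q <> la :: lc :: repeat lb k ++ la :: r') ->
     forall k r', 1 <= k -> r <> pat k r').
  { intros Hq k r' _ Hr. unfold pat in Hr. rewrite Er in Hr.
    apply rep_eq in Hr; [|exact Nq|exact I]. destruct Hr as [_ Hr]. eapply Hq; eauto. }
  destruct q as [|x q].
  { right. split; [reflexivity|]. apply NP. intros k r' H; discriminate. }
  destruct x; [|contradiction|].
  2:{ right. split; [reflexivity|]. apply NP. intros k r' H; discriminate. }
  destruct q as [|y q].
  { right. split; [reflexivity|]. apply NP. intros k r' H; discriminate. }
  destruct y; try (right; split; [reflexivity|]; apply NP; intros k r' H; discriminate).
  destruct (strip q) as [j q''] eqn:E2. apply strip_spec in E2 as [Eq Nq''].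
  assert (NP2 : (forall r', q'' <> la :: r') -> forall k r', 1 <= k -> r <> pat k r').
  { intros Hq. apply NP. intros k r' H. injection H as H. rewrite Eq in H.
    apply rep_eq in H; [|exact Nq''|exact I]. destruct H as [_ H]. eapply Hq; eauto. }
  destruct q'' as [|z r'].
  { right. split; [reflexivity|]. apply NP2. intros r' H; discriminate. }
  destruct z; try (right; split; [reflexivity|]; apply NP2; intros r0 H; discriminate).
  destruct (Nat.eqb i j && Nat.leb 1 i) eqn:B.
  - apply andb_prop in B as [B1 B2]. apply Nat.eqb_eq in B1. apply Nat.leb_le in B2.
    subst j. left. exists i, r'. split; [exact B2|]. split; [|reflexivity].
    rewrite Er, Eq. reflexivity.
  - right. split; [reflexivity|]. intros k r0 Hk Hr. unfold pat in Hr.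
    rewrite Er, Eq in Hr. apply rep_eq in Hr; [|exact I|exact I].
    destruct Hr as [-> Hr]. injection Hr as Hr.
    apply rep_eq in Hr; [|exact I|exact I]. destruct Hr as [-> _].
    rewrite Nat.eqb_refl in B. destruct k; [lia|discriminate].
Qed.

Definition rl (i : nat) : word := lc :: repeat lb i ++ [la].

Definition Ns (r : word) : Prop :=
  forall x y i, 1 <= i -> r <> x ++ rl i ++ rl i ++ y.

Lemma pat_rl : forall i r', lc :: pat i r' = rl i ++ rl i ++ r'.
Proof. intros. unfold pat, rl. simpl. rewrite <- !app_assoc. reflexivity. Qed.

Lemma rl_pat : forall i x y, x ++ rl i ++ rl i ++ y = x ++ lc :: pat i y.
Proof. intros. rewrite pat_rl. reflexivity. Qed.

Lemma step_nonc : forall r l, l <> lc -> step r l = l :: r.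
Proof. intros r [] H; try reflexivity. congruence. Qed.

Lemma Ns_step : forall r l, Ns r -> Ns (step r l).
Proof.
  intros r l H.
  assert (Hcons : forall l', l' <> lc -> Ns (l' :: r)).
  { intros l' Hl x y i Hi E. destruct x as [|z x].
    - simpl in E. unfold rl in E. injection E as E1 E2. congruence.
    - injection E as E1 E. exact (H _ _ _ Hi E). }
  destruct (letter_eq l) as [->|Hl].
  2:{ rewrite step_nonc by exact Hl. apply Hcons, Hl. }
  destruct (step_c r) as [[i [r' [Hi [Er ->]]]]|[-> Hn]].
  - intros x y j Hj E. apply (H (repeat lb i ++ la :: lc :: repeat lb i ++ la :: x) y j Hj).
    rewrite Er. unfold pat. rewrite E. rewrite <- !app_assoc. simpl. rewrite <- !app_assoc. reflexivity.
  - intros x y j Hj E. destruct x as [|z x].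
    + rewrite app_nil_l, <- pat_rl in E. injection E as E. exact (Hn _ _ Hj E).
    + injection E as E1 E. exact (H _ _ _ Hj E).
Qed.

Lemma F_app : forall t x y, F t (x ++ y) = F (F t x) y.
Proof. intros. unfold F. apply fold_left_app. Qed.

Lemma push_b : forall i r, F r (repeat lb i) = repeat lb i ++ r.
Proof.
  induction i; intro r; [reflexivity|].
  simpl. unfold F in *. simpl. rewrite IHi.
  clear. induction i; simpl; [reflexivity|]. rewrite IHi. reflexivity.
Qed.

Lemma F_lam : forall t i, F t (lam i) = step (repeat lb i ++ la :: t) lc.
Proof.
  intros. unfold lam. change (la :: repeat lb i ++ [lc]) with ([la] ++ repeat lb i ++ [lc]).
  rewrite !F_app, push_b. reflexivity.
Qed.

Lemma Ns_F : forall w t, Ns t -> Ns (F t w).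
Proof. induction w; intros t H; [exact H|]. apply IHw, Ns_step, H. Qed.

Lemma inv_rel : forall t i, Ns t -> 1 <= i -> F t (lam i ++ lam i) = t.
Proof.
  intros t i Ht Hi. rewrite F_app, (F_lam t i).
  destruct (step_c (repeat lb i ++ la :: t)) as [[j [r' [Hj [E ->]]]]|[-> Hn]].
  - unfold pat in E. apply rep_eq in E; [|exact I|exact I]. destruct E as [<- E].
    injection E as E. rewrite F_lam.
    destruct (step_c (repeat lb i ++ la :: r')) as [[k [r'' [Hk [E2 _]]]]|[-> _]].
    + exfalso. unfold pat in E2. apply rep_eq in E2; [|exact I|exact I].
      destruct E2 as [<- E2]. injection E2 as E2.
      apply (Ht [] r'' i Hi). rewrite E, E2. rewrite <- pat_rl. reflexivity.
    + rewrite E. reflexivity.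
  - rewrite F_lam.
    destruct (step_c (repeat lb i ++ la :: lc :: repeat lb i ++ la :: t)) as [[k [r'' [Hk [E2 ->]]]]|[_ Hn2]].
    + unfold pat in E2. apply rep_eq in E2; [|exact I|exact I].
      destruct E2 as [<- E2]. injection E2 as E2.
      apply rep_eq in E2; [|exact I|exact I]. destruct E2 as [_ E2]. injection E2 as E2. auto.
    + exfalso. exact (Hn2 i t Hi eq_refl).
Qed.

Lemma invariance : forall u v, pi2_eq u v -> forall t, Ns t -> F t u = F t v.
Proof.
  induction 1; intros t Ht.
  - rewrite inv_rel; auto.
  - reflexivity.
  - symmetry; auto.
  - rewrite IHpi2_eq1, IHpi2_eq2; auto.
  - rewrite !F_app. rewrite IHpi2_eq; auto. apply Ns_F, Ht.
Qed.

Lemma eq_app_r : forall u v y, pi2_eq u v -> pi2_eq (u ++ y) (v ++ y).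
Proof. intros. apply (pi2_ctx [] y u v H). Qed.

Lemma eq_app_l : forall u v x, pi2_eq u v -> pi2_eq (x ++ u) (x ++ v).
Proof. intros. pose proof (pi2_ctx x [] u v H). rewrite !app_nil_r in H0. exact H0. Qed.

Lemma step_sound : forall t l, pi2_eq (rev (step t l)) (rev t ++ [l]).
Proof.
  intros t l. destruct (letter_eq l) as [->|Hl].
  2:{ rewrite step_nonc by exact Hl. apply pi2_refl. }
  destruct (step_c t) as [[i [r' [Hi [E ->]]]]|[-> _]].
  - rewrite E. apply pi2_sym.
    assert (Eq : rev (pat i r') ++ [lc] = rev r' ++ (lam i ++ lam i)).
    { unfold pat, lam. rewrite !rev_app_distr. simpl. rewrite !rev_app_distr. simpl. rewrite !rev_repeat, <- !app_assoc. simpl. reflexivity. }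
    rewrite Eq. pose proof (eq_app_l _ _ (rev r') (pi2_rel i Hi)). rewrite app_nil_r in H. exact H.
  - apply pi2_refl.
Qed.

Lemma F_sound : forall w t, pi2_eq (rev (F t w)) (rev t ++ w).
Proof.
  induction w as [|l w IH]; intro t.
  - rewrite app_nil_r. apply pi2_refl.
  - change (F t (l :: w)) with (F (step t l) w).
    eapply pi2_trans. apply IH.
    replace (rev t ++ l :: w) with ((rev t ++ [l]) ++ w) by (rewrite <- app_assoc; reflexivity).
    apply eq_app_r, step_sound.
Qed.

Lemma Ns_nil : Ns [].
Proof. intros x y i _ E. destruct x; discriminate. Qed.

Inductive TCp : word -> Prop :=
| TCp_nil : TCp []
| TCp_lam : forall x i, 1 <= i -> TCp x -> TCp (x ++ lam i)
| TCp_open : forall x k, TCp x -> TCp (x ++ la :: repeat lb k).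

Lemma TCp_snoc : forall x l, TCp (x ++ [l]) -> TCp x.
Proof.
  intros x l H. remember (x ++ [l]) as z eqn:Ez. destruct H.
  - destruct x; discriminate.
  - unfold lam in Ez. rewrite app_comm_cons, app_assoc in Ez.
    apply app_inj_tail in Ez as [<- _]. apply TCp_open, H0.
  - destruct k as [|k].
    + simpl in Ez. apply app_inj_tail in Ez as [<- _]. exact H.
    + change (repeat lb (S k)) with (lb :: repeat lb k) in Ez.
      rewrite (repeat_cons k lb), app_comm_cons, app_assoc in Ez.
      apply app_inj_tail in Ez as [<- _]. apply TCp_open, H.
Qed.

Lemma pat_rev : forall i r', rev (pat i r') = (rev r' ++ lam i) ++ la :: repeat lb i.
Proof.
  intros. unfold pat, lam. rewrite !rev_app_distr. simpl. rewrite !rev_app_distr. simpl.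
  rewrite !rev_repeat, <- !app_assoc. simpl. rewrite <- app_assoc. reflexivity.
Qed.

Lemma RL : forall u r, Ns r -> F r u = [] -> TCp (rev r).
Proof.
  induction u as [|l u IH]; intros r Hr Hf.
  - simpl in Hf. subst. constructor.
  - change (F r (l :: u)) with (F (step r l) u) in Hf.
    pose proof (IH _ (Ns_step r l Hr) Hf) as H.
    destruct (letter_eq l) as [->|Hl].
    2:{ rewrite step_nonc in H by exact Hl. simpl in H. eapply TCp_snoc; exact H. }
    destruct (step_c r) as [[i [r' [Hi [E E2]]]]|[E2 _]]; rewrite E2 in H.
    + rewrite E, pat_rev. apply TCp_open, TCp_lam; assumption.
    + simpl in H. eapply TCp_snoc; exact H.
Qed.

Definition sw (l : letter) : letter := match l with la => lc | lb => lb | lc => la end.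
Definition sig (w : word) : word := rev (map sw w).

Lemma sig_app : forall x y, sig (x ++ y) = sig y ++ sig x.
Proof. intros. unfold sig. rewrite map_app, rev_app_distr. reflexivity. Qed.

Lemma sig_lam : forall i, sig (lam i) = lam i.
Proof.
  intros. unfold sig, lam. simpl. rewrite map_app. simpl. rewrite rev_app_distr. simpl.
  replace (map sw (repeat lb i)) with (repeat lb i) by (induction i; simpl; congruence).
  rewrite rev_repeat. reflexivity.
Qed.

Lemma sig_sig : forall w, sig (sig w) = w.
Proof.
  intros. unfold sig. rewrite map_rev, rev_involutive, map_map.
  induction w as [|[] w IH]; simpl; congruence.
Qed.

Lemma sig_eq : forall u v, pi2_eq u v -> pi2_eq (sig u) (sig v).
Proof.
  induction 1.
  - rewrite sig_app, sig_lam. apply pi2_rel, H.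
  - apply pi2_refl.
  - apply pi2_sym; auto.
  - eapply pi2_trans; eauto.
  - rewrite !sig_app, <- !app_assoc. apply pi2_ctx. exact IHpi2_eq.
Qed.

Lemma rev_sig_rl : forall i, rev (map sw (rl i)) = rl i.
Proof.
  intros. unfold rl. simpl. rewrite map_app. simpl. rewrite rev_app_distr. simpl.
  replace (map sw (repeat lb i)) with (repeat lb i) by (induction i; simpl; congruence).
  rewrite rev_repeat. reflexivity.
Qed.

Lemma Ns_sig : forall r, Ns r -> Ns (rev (map sw r)).
Proof.
  intros r H x y i Hi E.
  apply (H (rev (map sw y)) (rev (map sw x)) i Hi).
  transitivity (rev (map sw (rev (map sw r)))).
  { rewrite map_rev, rev_involutive, map_map.
    clear. induction r as [|[] r IH]; simpl; congruence. }
  rewrite E. rewrite !map_app, !rev_app_distr, !rev_sig_rl, <- !app_assoc. reflexivity.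
Qed.

Inductive TCq : word -> Prop :=
| TCq_nil : TCq []
| TCq_lam : forall x i, 1 <= i -> TCq x -> TCq (lam i ++ x)
| TCq_close : forall x k, TCq x -> TCq (repeat lb k ++ lc :: x).

Lemma TCp_sig : forall u, TCp u -> TCq (sig u).
Proof.
  induction 1.
  - constructor.
  - rewrite sig_app, sig_lam. constructor; auto.
  - rewrite sig_app.
    replace (sig (la :: repeat lb k)) with (repeat lb k ++ [lc]).
    + rewrite <- app_assoc. constructor. exact IHTCp.
    + unfold sig. simpl.
      replace (map sw (repeat lb k)) with (repeat lb k) by (induction k; simpl; congruence).
      rewrite rev_repeat. reflexivity.
Qed.

Lemma TCq_end : forall w, TCq w -> w = [] \/ exists w', w = w' ++ [lc].
Proof.
  induction 1.
  - auto.
  - right. destruct IHTCq as [->|[w' ->]].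
    + exists (la :: repeat lb i). rewrite app_nil_r. reflexivity.
    + exists (lam i ++ w'). rewrite app_assoc. reflexivity.
  - right. destruct IHTCq as [->|[w' ->]].
    + exists (repeat lb k). reflexivity.
    + exists (repeat lb k ++ lc :: w'). rewrite <- app_assoc. reflexivity.
Qed.

Lemma no_a_rep : forall k l, ~ In la (repeat lb k ++ l) -> ~ In la l.
Proof. intros k l H H'. apply H, in_or_app. auto. Qed.

Lemma la_notin : forall k, ~ In la (repeat lb k ++ [lc]).
Proof.
  intros k H. apply in_app_or in H as [H|H].
  - apply repeat_spec in H. discriminate.
  - destruct H as [H|[]]. discriminate.
Qed.

Lemma la_in : forall x l, In la (x ++ la :: l).
Proof. intros. apply in_or_app. right. left. reflexivity. Qed.

Lemma TCq_unlam : forall z, TCq z -> forall x i, z = x ++ lam i -> TCq x.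
Proof.
  induction 1; intros x0 j Ez.
  - destruct x0; discriminate.
  - apply app_eq_app in Ez as [l [[E1 E2]|[E1 E2]]].
    + destruct l as [|y l].
      * rewrite app_nil_r in E1. subst. rewrite <- (app_nil_r (lam i)). constructor; [exact H|constructor].
      * unfold lam at 1 in E2. injection E2 as Ey _. subst y.
        destruct x0 as [|z x0]; [constructor|].
        unfold lam in E1. injection E1 as _ E1.
        exfalso. apply (la_notin i). rewrite E1. apply la_in.
    + subst. constructor; [exact H|]. eapply IHTCq. reflexivity.
  - replace (repeat lb k ++ lc :: x) with ((repeat lb k ++ [lc]) ++ x) in Ez
      by (rewrite <- app_assoc; reflexivity).
    apply app_eq_app in Ez as [l [[E1 E2]|[E1 E2]]].
    + destruct l as [|y l].
      * rewrite app_nil_r in E1. subst. apply (TCq_close [] k). constructor.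
      * unfold lam in E2. injection E2 as Ey _. subst y.
        exfalso. apply (la_notin k). rewrite E1. apply la_in.
    + subst. rewrite <- app_assoc. constructor. eapply IHTCq. reflexivity.
Qed.

Lemma combine_TC : forall w, TCp w -> TCq w ->
  exists l, Forall (fun i => 1 <= i) l /\ w = concat (map lam l).
Proof.
  induction 1; intro Hq.
  - exists []. split; [constructor|reflexivity].
  - destruct (IHTCp (TCq_unlam _ Hq x i eq_refl)) as [l [Hl ->]].
    exists (l ++ [i]). split.
    + apply Forall_app. split; [exact Hl|constructor; [exact H|constructor]].
    + rewrite map_app, concat_app. simpl. rewrite app_nil_r. reflexivity.
  - exfalso. destruct (TCq_end _ Hq) as [E|[w' E]].
    + destruct x; discriminate.
    + destruct k as [|k].
      * simpl in E. apply app_inj_tail in E as [_ E]. discriminate.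
      * change (repeat lb (S k)) with (lb :: repeat lb k) in E.
        rewrite (repeat_cons k lb), app_comm_cons, app_assoc in E.
        apply app_inj_tail in E as [_ E]. discriminate.
Qed.

Lemma inv_prod : forall l, Forall (fun i => 1 <= i) l ->
  pi2_eq (concat (map lam l) ++ concat (map lam (rev l))) [].
Proof.
  induction 1 as [|i l Hi Hl IH].
  - apply pi2_refl.
  - change (concat (map lam (i :: l))) with (lam i ++ concat (map lam l)).
    change (rev (i :: l)) with (rev l ++ [i]).
    rewrite map_app, concat_app. change (concat (map lam [i])) with (lam i ++ []). rewrite app_nil_r.
    eapply pi2_trans with (v := lam i ++ [] ++ lam i).
    + replace ((lam i ++ concat (map lam l)) ++ concat (map lam (rev l)) ++ lam i)
        with (lam i ++ (concat (map lam l) ++ concat (map lam (rev l))) ++ lam i)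
        by (rewrite <- !app_assoc; reflexivity).
      exact (pi2_ctx (lam i) (lam i) _ [] IH).
    + apply pi2_rel, Hi.
Qed.

Lemma Ns_tail : forall l r, Ns (l :: r) -> Ns r.
Proof. intros l r H x y i Hi E. apply (H (l :: x) y i Hi). rewrite E. reflexivity. Qed.

Lemma F_fix : forall r, Ns r -> F [] (rev r) = r.
Proof.
  induction r as [|l r IH]; intro H; [reflexivity|].
  simpl. rewrite F_app, (IH (Ns_tail _ _ H)).
  destruct (letter_eq l) as [->|Hl]; [|apply step_nonc, Hl].
  destruct (step_c r) as [[i [r' [Hi [E _]]]]|[E _]]; [|exact E].
  exfalso. apply (H [] r' i Hi). rewrite E, pat_rl. reflexivity.
Qed.

Lemma right_unit_TCp : forall w v, pi2_eq (w ++ v) [] ->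
  forall r, Ns r -> pi2_eq (rev r) w -> TCp (rev r).
Proof.
  intros w v H r Hr Hw.
  apply (RL v r Hr).
  rewrite <- (F_fix r Hr) at 1. rewrite <- F_app.
  rewrite (invariance (rev r ++ v) [] ).
  - reflexivity.
  - eapply pi2_trans; [apply eq_app_r, Hw|exact H].
  - apply Ns_nil.
Qed.

Theorem mainTheorem8 : forall w : word, in_Lambda_submonoid w <-> pi2_unit w.
Proof.
  intro w. split.
  - intros [l [Hl Hw]]. split.
    + exists (concat (map lam (rev l))).
      eapply pi2_trans; [apply eq_app_r, Hw|]. apply inv_prod, Hl.
    + exists (concat (map lam (rev l))).
      eapply pi2_trans; [apply eq_app_l, Hw|].
      pose proof (inv_prod (rev l)) as H. rewrite rev_involutive in H.
      apply H. apply Forall_rev, Hl.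
  - intros [[v Hv] [v' Hv']].
    set (r := F [] w).
    assert (Hr : Ns r) by (apply Ns_F, Ns_nil).
    assert (Hn : pi2_eq (rev r) w) by (apply (F_sound w [])).
    pose proof (right_unit_TCp w v Hv r Hr Hn) as Hp.
    set (n := rev r) in *.
    assert (Hs : pi2_eq (sig w ++ sig v') []).
    { rewrite <- sig_app. apply (sig_eq _ _ Hv'). }
    set (r2 := rev (sig n)).
    assert (Hr2 : Ns r2).
    { unfold r2, n, sig. rewrite rev_involutive, map_rev. apply Ns_sig, Hr. }
    assert (Hp2 : TCp (rev r2)).
    { apply (right_unit_TCp (sig w) (sig v') Hs r2 Hr2).
      unfold r2. rewrite rev_involutive. apply sig_eq, Hn. }
    unfold r2 in Hp2. rewrite rev_involutive in Hp2.
    apply TCp_sig in Hp2. rewrite sig_sig in Hp2.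
    destruct (@combine_TC n Hp Hp2) as [l [Hl E]].
    exists l. split; [exact Hl|]. apply pi2_sym. rewrite <- E. exact Hn.
Qed.
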